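(* Let $(u,g,r,h)$ be a symmetric RUM-NCF in which each $g(x,y)$ is strictly positive on $\mathbb{R}$, and let $(p,f)$ be an SCF-RT generated by it. Then for any $(x,y)\in D$, with $q=p(x,y)/p(y,x)$: if $u(x)\geq u(y)$ then $F(y,x)$ $q$-FSD $F(x,y)$, and if $u(x)>u(y)$ then $F(y,x)$ $q$-SFSD $F(x,y)$.
   Context: $X$ is a finite set of options; $C=\{(x,y): x,y\in X,\ x\neq y\}$; $D\subseteq C$ is a fixed non-empty set with $(x,y)\in D\Rightarrow (y,x)\in D$. An SCF $p$ assigns to each $(x,y)\in D$ a number $p(x,y)>0$ with $p(x,y)+p(y,x)=1$. An SCF-RT is a pair $(p,f)$ where $p$ is an SCF and $f$ assigns to each $(x,y)\in D$ a strictly positive density $f(x,y)$ on $\mathbb{R}^+$ with cdf $F(x,y)$. A RUM is a pair $(u,g)$ with $u:X\to\mathbb{R}$ and $g$ assigning to each $(x,y)\in C$ a density $g(x,y)$ on $\mathbb{R}$ (cdf $G(x,y)$) with $\int v\,g(x,y)(v)\,dv=u(x)-u(y)=:v(x,y)$, $g(x,y)(v)=g(y,x)(-v)$ for all $v$, and connected support. A RUM-CF is $(u,g,r)$ with $(u,g)$ a RUM and $r:\mathbb{R}^{++}\to\mathbb{R}^+$ continuous, strictly decreasing where $r(v)>0$, $\lim_{v\to0}r(v)=\infty$, $\lim_{v\to\infty}r(v)=0$; $r^{-1}(t)$ ($t>0$) is the inverse of $r$ restricted to $\{r>0\}$. It is symmetric if $g(x,y)(v(x,y)+\delta)=g(x,y)(v(x,y)-\delta)$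 for all $(x,y)\in C$, $\delta\geq0$. A random utility model with a noisy chronometric function (RUM-NCF) is $(u,g,r,h)$ where $(u,g,r)$ is a RUM-CF and $h$ is a density on $\mathbb{R}^+$ of a non-negative random variable $\tilde\eta$ with mean one; the response time for realized utility difference $v$ is $r(|v|)\cdot\tilde\eta$ with $\tilde\eta$ independent. It is symmetric if $(u,g,r)$ is. An SCF-RT $(p,f)$ is generated by $(u,g,r,h)$ if for all $(x,y)\in D$: $p(y,x)=G(x,y)(0)$ and $F(x,y)(t)=\frac{\int_0^\infty[1-G(x,y)(r^{-1}(t/\eta))]h(\eta)\,d\eta}{1-G(x,y)(0)}$ for all $t>0$. For cdfs $G,H$ on $\mathbb{R}^+$ and $q>0$, $G$ $q$-FSD $H$ means $G(t)\leq qH(t)$ for all $t\geq0$; $q$-SFSD means additionally strict inequality for some $t$. *)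

(* Defs.v *)
From HB Require Import structures.
From mathcomp Require Import all_boot all_order all_algebra.
From mathcomp Require Import all_classical all_reals all_analysis.
Set Implicit Arguments. Unset Strict Implicit. Unset Printing Implicit Defensive.
Import Order.TTheory GRing.Theory Num.Theory.
Import numFieldNormedType.Exports.
Local Open Scope classical_set_scope.
Local Open Scope ring_scope.

Section Defs.
Variable R : realType.
Local Notation mu := (@lebesgue_measure R).
Definition Rplus_set : set R := `[0, +oo[%classic.

Definition density_R (g : R -> R) : Prop :=
  [/\ measurable_fun setT g, (forall v, 0 <= g v)
    & (\int[mu]_(v in setT) (g v)%:E = 1)%E].

(* a probability density on R+ = [0, +oo) (values on negatives irrelevant) *)
Definition density_Rplus (f : R -> R) : Prop :=
  [/\ measurable_fun Rplus_set f, (forall t, 0 <= t -> 0 <= f t)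
    & (\int[mu]_(t in Rplus_set) (f t)%:E = 1)%E].

Definition cdf_R (g : R -> R) (t : R) : R :=
  Rintegral mu (`]-oo, t]%classic : set R) g.

Definition cdf_Rplus (f : R -> R) (t : R) : R :=
  Rintegral mu (`[0, t]%classic : set R) f.

Definition support (g : R -> R) : set R := closure [set v | 0 < g v].

Definition is_domain (X : finType) (D : set (X * X)) : Prop :=
  [/\ D !=set0, (forall x y, D (x, y) -> x != y)
    & (forall x y, D (x, y) -> D (y, x))].

Definition is_SCF (X : finType) (D : set (X * X)) (p : X -> X -> R) : Prop :=
  forall x y, D (x, y) -> 0 < p x y /\ p x y + p y x = 1.

(* SCF-RT (p,f); the cdf F(x,y) is cdf_Rplus (f x y) *)
Definition is_SCF_RT (X : finType) (D : set (X * X))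
    (p : X -> X -> R) (f : X -> X -> R -> R) : Prop :=
  is_SCF D p /\
  forall x y, D (x, y) ->
    density_Rplus (f x y) /\ (forall t, 0 <= t -> 0 < f x y t).

(* RUM (u,g): g(x,y) defined for all (x,y) in C, i.e. x <> y *)
Definition is_RUM (X : finType) (u : X -> R) (g : X -> X -> R -> R) : Prop :=
  forall x y, x != y ->
    [/\ density_R (g x y),
        mu.-integrable setT (fun v => (v * g x y v)%:E),
        Rintegral mu setT (fun v => v * g x y v) = u x - u y,
        (forall v, g x y v = g y x (- v))
      & connected (support (g x y))].

(* chronometric function r : R++ -> R+ (values at v <= 0 irrelevant) *)
Definition is_chronometric (r : R -> R) : Prop :=
  [/\ (forall v, 0 < v -> 0 <= r v),
      {within (`]0, +oo[%classic : set R), continuous r},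
      (forall a b, 0 < a -> a < b -> 0 < r a -> 0 < r b -> r b < r a),
      r x @[x --> 0^'+] --> +oo
    & r x @[x --> +oo] --> 0].

Definition rinv (r : R -> R) (t : R) : R :=
  xget 0 [set v | 0 < v /\ 0 < r v /\ r v = t].

Definition is_RUM_CF (X : finType) (u : X -> R) (g : X -> X -> R -> R)
    (r : R -> R) : Prop :=
  is_RUM u g /\ is_chronometric r.

Definition symmetric_RUM_CF (X : finType) (u : X -> R) (g : X -> X -> R -> R)
    : Prop :=
  forall x y, x != y -> forall d, 0 <= d ->
    g x y (u x - u y + d) = g x y (u x - u y - d).

Definition is_noise (h : R -> R) : Prop :=
  [/\ density_Rplus h,
      mu.-integrable Rplus_set (fun e => (e * h e)%:E)
    & Rintegral mu Rplus_set (fun e => e * h e) = 1].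

Definition is_RUM_NCF (X : finType) (u : X -> R) (g : X -> X -> R -> R)
    (r : R -> R) (h : R -> R) : Prop :=
  is_RUM_CF u g r /\ is_noise h.

Definition symmetric_RUM_NCF (X : finType) (u : X -> R) (g : X -> X -> R -> R)
    (r : R -> R) (h : R -> R) : Prop :=
  is_RUM_NCF u g r h /\ symmetric_RUM_CF u g.

Definition generated_by (X : finType) (D : set (X * X))
    (p : X -> X -> R) (f : X -> X -> R -> R)
    (u : X -> R) (g : X -> X -> R -> R) (r : R -> R) (h : R -> R) : Prop :=
  forall x y, D (x, y) ->
    p y x = cdf_R (g x y) 0 /\
    forall t, 0 < t ->
      cdf_Rplus (f x y) t =
        Rintegral mu Rplus_set
          (fun e => (1 - cdf_R (g x y) (rinv r (t / e))) * h e)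
        / (1 - cdf_R (g x y) 0).

Definition qFSD (G H : R -> R) (q : R) : Prop :=
  forall t, 0 <= t -> G t <= q * H t.

Definition qSFSD (G H : R -> R) (q : R) : Prop :=
  qFSD G H q /\ exists t, 0 <= t /\ G t < q * H t.

End Defs.

(* Main.v *)
Require Import Defs.
From HB Require Import structures.
From mathcomp Require Import all_boot all_order all_algebra.
From mathcomp Require Import all_classical all_reals all_analysis.
From mathcomp Require Import ring lra measurable_realfun.
Import Order.TTheory GRing.Theory Num.Theory.
Import numFieldNormedType.Exports.
Local Open Scope classical_set_scope.
Local Open Scope ring_scope.

Set Implicit Arguments.
Section S.
Variable R : realType.
Local Notation mu := (@lebesgue_measure R).

Lemma shift_meas (s : R) : measurable_fun setT (fun w : R => w + s).
Proof. exact: (measurable_realfun.measurable_funD (f:=id) (g:=cst s)). Qed.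

Lemma push_shift (s : R) A : measurable A ->
  pushforward mu (fun w : R => w + s) A = mu A.
Proof.
move=> mA.
have mf : @measurable_fun _ _ (measurableTypeR R) (measurableTypeR R) setT (fun w => w + s) := shift_meas s.
have := @lebesgue_measure_unique R
  (measure_function_pushforward__canonical__measure_function_Measure mu mf).
move=> H; rewrite H //= => X [[a b] _ <-] /=.
rewrite /pushforward.
have -> : (fun w => w + s) @^-1` `]a, b] = `](a - s), (b - s)]%classic :> set R.
  apply/seteqP; split => w /=; rewrite !in_itv /= ?lerBrDr ?ltrBlDr //.
rewrite !lebesgue_measure_itv /= !lte_fin ltrD2r.
case: ifP => // _.
by rewrite -!EFinD; congr EFin; ring.
Qed.

Lemma shift_integral (s c : R) (k : R -> R) : measurable_fun setT k -> (forall x, 0 <= k x) ->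
 (\int[mu]_(w in `]-oo, c%R]) (k (w + s))%:E = \int[mu]_(w in `]-oo, (c + s)%R]) (k w)%:E)%E.
Proof.
move=> mk k0.
have mf : @measurable_fun _ _ (measurableTypeR R) (measurableTypeR R) setT (fun w => w + s) := shift_meas s.
rewrite [RHS](@eq_measure_integral _ (measurableTypeR R) R _ (@pushforward _ _ (measurableTypeR R) (measurableTypeR R) R mu (fun w => w + s))); last first.
  by move=> A mA _; exact: (esym (@push_shift s A mA)).
rewrite (@ge0_integral_pushforward _ _ _ _ _ _ mf mu) //; last first.
- by move=> y _; rewrite lee_fin.
- by apply/measurable_EFinP; apply: measurable_funTS.
have -> : (fun w => w + s) @^-1` `]-oo, (c + s)] = `]-oo, c]%classic :> set R.
  by apply/seteqP; split => w /=; rewrite !in_itv /= lerD2r.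
by [].
Qed.

Lemma rinv_ge0 (r : R -> R) t : 0 <= rinv r t.
Proof. by rewrite /rinv; case: xgetP => // v _ [/ltW]. Qed.

Lemma rinv_nonpos (r : R -> R) t : t <= 0 -> rinv r t = 0.
Proof.
move=> t0; rewrite /rinv xgetPN // => v [_ [rv0 rvt]].
by move: rv0; rewrite rvt ltNge t0.
Qed.

Lemma rinv_ex (r : R -> R) s : is_chronometric r -> 0 < s ->
  exists v, 0 < v /\ 0 < r v /\ r v = s.
Proof.
case=> r0 rc rdec r0oo rinf0 s0.
have [a [a0 ra]] : exists a, 0 < a /\ s < r a.
  move/cvgryPgt : r0oo => /(_ s) H.
  have H2 := @nbhs_right_gt R 0.
  have HP : ProperFilter (nbhs (0:R)^'+) by exact: at_right_proper_filter.
  have [a [Ha1 Ha2]] := @filter_ex _ _ HP _ (filterI H H2).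
  by exists a.
have [b [ab rb]] : exists b, a < b /\ r b < s.
  have H : \forall x \near +oo, r x < s.
    exact: (cvgr_lt 0 rinf0 s s0).
  have H2 : \forall x \near +oo, a < x by apply: nbhs_pinfty_gt; exact: num_real.
  have HP : ProperFilter (pinfty_nbhs R) by exact: proper_pinfty_nbhs.
  have [b [Hb1 Hb2]] := @filter_ex _ _ HP _ (filterI H2 H).
  by exists b.
have cab : {within `[a, b], continuous r}.
  apply: continuous_subspaceW rc => x /=; rewrite !in_itv /= => /andP[ax _].
  by rewrite andbT (lt_le_trans a0 ax).
have hs : Num.min (r a) (r b) <= s <= Num.max (r a) (r b).
  apply/andP; split.
    by rewrite ge_min (ltW rb) orbT.
  by rewrite le_max (ltW ra).
have [c] := @IVT R r a b s (ltW ab) cab hs.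
rewrite in_itv /= => /andP[ac cb] rcs.
exists c; split; first exact: lt_le_trans ac.
by rewrite rcs.
Qed.

Lemma rinv_spec (r : R -> R) s : is_chronometric r -> 0 < s ->
  0 < rinv r s /\ 0 < r (rinv r s) /\ r (rinv r s) = s.
Proof. move=> rc s0; have := xgetPex 0 (rinv_ex s rc s0). by rewrite /rinv. Qed.

Lemma rinv_mono (r : R -> R) s1 s2 : is_chronometric r -> 0 < s1 -> s1 <= s2 ->
  rinv r s2 <= rinv r s1.
Proof.
move=> rc s10 s12.
have [v10 [rv10 rv1]] := rinv_spec s1 rc s10.
have [v20 [rv20 rv2]] := rinv_spec s2 rc (lt_le_trans s10 s12).
rewrite leNgt; apply/negP => H.
case: rc => _ _ rdec _ _.
have := rdec _ _ v10 H rv10 rv20.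
by rewrite rv1 rv2 ltNge s12.
Qed.

Lemma rinv_comp_nd (r : R -> R) t : is_chronometric r -> 0 < t ->
  {homo (fun e => rinv r (t / e)) : e1 e2 / e1 <= e2}.
Proof.
move=> rc t0 e1 e2 e12 /=.
have [e10|e10] := leP e1 0.
  rewrite (@rinv_nonpos r (t / e1)) ?rinv_ge0 //.
  have [->|e1n] := eqVneq e1 0; first by rewrite invr0 mulr0.
  by rewrite pmulr_rle0 // invr_le0.
have e20 : 0 < e2 by exact: lt_le_trans e12.
apply: rinv_mono => //; first by rewrite divr_gt0.
by rewrite ler_pM2l // lef_pV2 // posrE.
Qed.


Lemma dens_int g : density_R g -> mu.-integrable setT (EFin \o g).
Proof.
case=> mg g0 ig; apply/integrableP; split; first exact/measurable_EFinP.
under eq_integral do rewrite /= ger0_norm //.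
by rewrite ig ltry.
Qed.

Lemma Rint_ae0 D f : measurable D -> mu.-integrable D (EFin \o f) ->
  (forall x, D x -> 0 <= f x) -> Rintegral mu D f = 0 ->
  ae_eq mu D (EFin \o f) (cst 0%E).
Proof.
move=> mD intf f0 I0.
have mf := measurable_int mu intf.
apply/(ae_eq_integral_abs mu mD mf).
have fin := integrable_fin_num mD intf.
have E : (\int[mu]_(x in D) (EFin \o f) x = 0)%E.
  by rewrite -(fineK fin); move: I0; rewrite /Rintegral => ->.
rewrite -E; apply: eq_integral => x /[!inE] Dx /=.
by rewrite ger0_norm // f0.
Qed.

Lemma cdf_diff g a b : density_R g -> a <= b ->
  cdf_R g b - cdf_R g a = Rintegral mu `]a, b] g.
Proof.
move=> dg ab; rewrite /cdf_R Rintegral_itvB //.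
- by apply: integrableS (dens_int dg).
Qed.

Lemma Rint_itv_gt0 g a b : density_R g -> (forall v, 0 < g v) -> a < b ->
  0 < Rintegral mu `]a, b] g.
Proof.
move=> dg gpos ab.
have int : mu.-integrable `]a, b] (EFin \o g) by apply: integrableS (dens_int dg).
rewrite lt0r Rintegral_ge0 ?andbT; last by move=> x _; exact: ltW.
apply/eqP => I0.
have := Rint_ae0 (measurable_itv _) int (fun x _ => ltW (gpos x)) I0.
case=> N [mN N0 sN].
have : (mu `]a, b] <= mu N)%E.
  apply: le_measure => //; rewrite ?inE //.
  move=> x abx; apply: sN => /= /(_ abx) /= [] /eqP.
  by rewrite gt_eqF.
rewrite N0 lebesgue_measure_itv /= lte_fin ab -EFinD lee_fin.
by rewrite subr_le0 leNgt ab.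
Qed.

Lemma cdf_nd (g : R -> R) : density_R g -> {homo cdf_R g : a b / a <= b}.
Proof.
move=> dg a b ab; rewrite -subr_ge0 cdf_diff //.
by apply: Rintegral_ge0 => x _; case: dg => _ g0 _.
Qed.

Lemma cdf_lt (g : R -> R) a b : density_R g -> (forall v, 0 < g v) -> a < b -> cdf_R g a < cdf_R g b.
Proof.
move=> dg gp ab; rewrite -subr_gt0 cdf_diff ?Rint_itv_gt0 //; exact: ltW.
Qed.

Lemma cdf_ge0 (g : R -> R) c : density_R g -> 0 <= cdf_R g c.
Proof. by move=> dg; apply: Rintegral_ge0 => x _; case: dg => _ g0 _. Qed.

Lemma cdf_le1 (g : R -> R) c : density_R g -> cdf_R g c <= 1.
Proof.
move=> dg; have := dg; case=> mg g0 ig.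
rewrite /cdf_R /Rintegral.
have -> : (1:R) = fine (\int[mu]_(v in [set: R]) (g v)%:E)%E by rewrite ig.
apply: fine_le.
- apply: integrable_fin_num => //; apply: integrableS (dens_int dg) => //.
- by rewrite ig.
apply: ge0_subset_integral => //.
- by apply/measurable_EFinP.
- by move=> x _; rewrite lee_fin.
Qed.

Lemma cdf_shift (g k : R -> R) s c : density_R g -> (forall w, k w = g (w + s)) ->
  cdf_R k c = cdf_R g (c + s).
Proof.
move=> dg kE; rewrite /cdf_R /Rintegral; congr fine.
under eq_integral do rewrite kE.
case: dg => mg g0 _; exact: shift_integral.
Qed.

Lemma int_phi_h (phi h : R -> R) : density_Rplus h -> measurable_fun (@Rplus_set R) phi ->
  (forall e, 0 <= phi e <= 1) ->
  mu.-integrable (@Rplus_set R) (EFin \o (fun e => phi e * h e)).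
Proof.
case=> mh h0 ih mphi phib; apply/integrableP; split.
  by apply/measurable_EFinP; exact: measurable_funM.
apply: (@le_lt_trans _ _ (\int[mu]_(e in (@Rplus_set R)) (h e)%:E)%E); last by rewrite ih ltry.
apply: ge0_le_integral => //.
- exact: measurable_itv.
- apply: measurableT_comp => //; apply/measurable_EFinP; exact: measurable_funM.
- by apply/measurable_EFinP.
move=> e; rewrite /Rplus_set /= in_itv /= andbT => e0.
have := phib e => /andP[p0 p1].
rewrite lee_fin normrM (ger0_norm p0) (ger0_norm (h0 _ e0)).
by rewrite ler_piMl // h0.
Qed.
End S.
Unset Implicit Arguments.

Theorem proposition5 (R : realType) (X : finType) (D : set (X * X))
    (u : X -> R) (g : X -> X -> R -> R) (r : R -> R) (h : R -> R)
    (p : X -> X -> R) (f : X -> X -> R -> R) :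
  is_domain D ->
  symmetric_RUM_NCF u g r h ->
  (forall x y, x != y -> forall v, 0 < g x y v) ->
  is_SCF_RT D p f ->
  generated_by D p f u g r h ->
  forall x y, D (x, y) ->
    let q := p x y / p y x in
    (u y <= u x -> qFSD (cdf_Rplus (f y x)) (cdf_Rplus (f x y)) q) /\
    (u y < u x -> qSFSD (cdf_Rplus (f y x)) (cdf_Rplus (f x y)) q).
Proof.
move=> dom [[[rum chron] noise] symcf] gpos [scf fdens] gen x y Dxy q.
have Dyx : D (y, x) by case: dom => _ _ /(_ x y Dxy).
have nxy : x != y by case: dom => _ /(_ x y Dxy).
have [pxy0 sum1] := scf x y Dxy.
have [pyx0 _] := scf y x Dyx.
have [dxy _ _ gsym _] := rum x y nxy.
set V := u x - u y.
have gyxE : forall w, g y x w = g x y (w + (V + V)).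
  move=> w.
  have -> : g y x w = g x y (- w) by rewrite gsym opprK.
  have [d0|d0] := leP 0 (w + V).
  - have := symcf x y nxy (w + V) d0; rewrite -/V.
    have -> : V + (w + V) = w + (V + V) by ring.
    have -> : V - (w + V) = - w by ring.
    by move=> ->.
  - have := symcf x y nxy (- (w + V)); rewrite -/V.
    have -> : V + - (w + V) = - w by ring.
    have -> : V - - (w + V) = w + (V + V) by ring.
    by apply; rewrite oppr_ge0 ltW.
have GyxE : forall c, cdf_R (g y x) c = cdf_R (g x y) (c + (V + V)).
  by move=> c; apply: cdf_shift.
have [pyxE FxyE] := gen x y Dxy.
have [pxyE FyxE] := gen y x Dyx.
have hd : density_Rplus h by case: noise.
have mRp : measurable (@Rplus_set R) by exact: measurable_itv.
set G := cdf_R (g x y).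
have mG : forall t s, 0 < t -> measurable_fun (@Rplus_set R) (fun e => G (rinv r (t / e) + s)).
  move=> t s t0; apply: nondecreasing_measurable => // a b ab.
  by apply: cdf_nd => //; rewrite lerD2r; exact: rinv_comp_nd.
have G01 : forall c, 0 <= G c <= 1 by move=> c; rewrite cdf_ge0 ?cdf_le1.
have key : forall t, 0 < t ->
  Rintegral (@lebesgue_measure R) (@Rplus_set R) (fun e => (1 - G (rinv r (t / e))) * h e)
  - Rintegral (@lebesgue_measure R) (@Rplus_set R) (fun e => (1 - cdf_R (g y x) (rinv r (t / e))) * h e)
  = Rintegral (@lebesgue_measure R) (@Rplus_set R) (fun e => (G (rinv r (t / e) + (V + V)) - G (rinv r (t / e))) * h e).
  move=> t t0.
  have mG0 : measurable_fun (@Rplus_set R) (fun e => G (rinv r (t / e))).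
    apply: nondecreasing_measurable => // a b ab.
    by apply: cdf_nd => //; exact: rinv_comp_nd.
  have -> : Rintegral (@lebesgue_measure R) (@Rplus_set R) (fun e => (1 - cdf_R (g y x) (rinv r (t / e))) * h e)
     = Rintegral (@lebesgue_measure R) (@Rplus_set R) (fun e => (1 - G (rinv r (t / e) + (V + V))) * h e).
    by apply: eq_Rintegral => e _; rewrite GyxE.
  rewrite -RintegralB //.
  - by apply: eq_Rintegral => e _; ring.
  - apply: int_phi_h => //.
      by apply: measurable_funB => //; exact: measurable_cst.
    move=> e; have /andP[a b] := G01 (rinv r (t / e)).
    by rewrite subr_ge0 b /= lerBlDr lerDl.
  - apply: int_phi_h => //.
      by apply: measurable_funB => //; exact: mG.
    move=> e; have /andP[a b] := G01 (rinv r (t / e) + (V + V)).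
    by rewrite subr_ge0 b /= lerBlDr lerDl.
pose Ixy t := Rintegral (@lebesgue_measure R) (@Rplus_set R) (fun e => (1 - G (rinv r (t / e))) * h e).
pose Iyx t := Rintegral (@lebesgue_measure R) (@Rplus_set R) (fun e => (1 - cdf_R (g y x) (rinv r (t / e))) * h e).
have Fyx' : forall t, 0 < t -> cdf_Rplus (f y x) t = Iyx t / p y x.
  move=> t t0; rewrite FyxE // -pxyE; congr (_ / _); lra.
have Fxy' : forall t, 0 < t -> q * cdf_Rplus (f x y) t = Ixy t / p y x.
  move=> t t0; rewrite FxyE // -pyxE (_ : 1 - p y x = p x y); last by lra.
  rewrite /q /Ixy; field.
  by rewrite (gt_eqF pyx0) (gt_eqF pxy0).
have nonneg_k : forall t e, (@Rplus_set R) e -> 0 <= V ->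
    0 <= (G (rinv r (t / e) + (V + V)) - G (rinv r (t / e))) * h e.
  move=> t e Re V0; apply: mulr_ge0.
    by rewrite subr_ge0; apply: cdf_nd => //; rewrite lerDl addr_ge0.
  case: hd => _ h0 _; apply: h0; move: Re; rewrite /Rplus_set /= in_itv /= andbT.
  by [].
have le_part : 0 <= V -> qFSD (cdf_Rplus (f y x)) (cdf_Rplus (f x y)) q.
  move=> V0 t; rewrite le_eqVlt => /predU1P[<-|t0].
    by rewrite /cdf_Rplus set_itv1 !Rintegral_set1 mulr0.
  rewrite Fxy' // Fyx' //; apply: ler_wpM2r; first by rewrite invr_ge0 ltW.
  rewrite -subr_ge0 key //; apply: Rintegral_ge0 => e Re; exact: nonneg_k.
split.
  by move=> uyx; apply: le_part; rewrite subr_ge0.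
move=> uyx; have V0 : 0 < V by rewrite subr_gt0.
split; first exact: le_part (ltW V0).
exists 1; split => //.
rewrite Fxy' // Fyx' // ltr_pM2r ?invr_gt0 //.
rewrite -subr_gt0 key // lt0r Rintegral_ge0 ?andbT; last first.
  by move=> e Re; exact: nonneg_k (ltW V0).
apply/eqP => I0.
have kpos : forall e, 0 < G (rinv r (1 / e) + (V + V)) - G (rinv r (1 / e)).
  move=> e; rewrite subr_gt0; apply: cdf_lt => //; [exact: gpos | by rewrite ltrDl addr_gt0].
have mk : measurable_fun (@Rplus_set R) (fun e => G (rinv r (1 / e) + (V + V)) - G (rinv r (1 / e))).
  apply: measurable_funB; first exact: mG.
  apply: nondecreasing_measurable => // a b ab.
  by apply: cdf_nd => //; exact: rinv_comp_nd.
have intk := int_phi_h hd mk.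
have intk' : (@lebesgue_measure R).-integrable (@Rplus_set R)
    (EFin \o (fun e => (G (rinv r (1 / e) + (V + V)) - G (rinv r (1 / e))) * h e)).
  apply: intk => e; rewrite ltW ?kpos //=.
  have /andP[_ b] := G01 (rinv r (1 / e) + (V + V)).
  have /andP[a _] := G01 (rinv r (1 / e)).
  lra.
have Hae := Rint_ae0 mRp intk' (fun e Re => nonneg_k 1 e Re (ltW V0)) I0.
have hae : ae_eq (@lebesgue_measure R) (@Rplus_set R) (EFin \o h) (cst 0%E).
  apply: filterS Hae => e He Re; have := He Re => /= /eqP.
  by rewrite eqe mulf_eq0 (gt_eqF (kpos e)) /= => /eqP ->.
have := @ae_eq_integral _ (measurableTypeR R) R (@lebesgue_measure R) _ (cst 0%E) (EFin \o h) mRp _ _ hae.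
rewrite integral0.
case: hd => mh _ -> .
have mh' : measurable_fun (@Rplus_set R) (EFin \o h) by apply/measurable_EFinP.
by move=> /(_ mh' (measurable_cst _)) /eqP; rewrite onee_eq0.
Qed.
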